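(* Let $W\in\mathcal{P}(\mathcal{Y}|\mathcal{X})$ be a symmetric and singular channel with no all-zero column, and fix $x_{\mathrm o}\in\mathcal{X}$ and $\epsilon\in(0,1)$. (i) For every $x\in\mathcal{X}$ and $\lambda\in\mathbb{R}$, $M_x(\lambda)=M_{x_{\mathrm o}}(\lambda)$. (ii) For all $x\in\mathcal{X}$: $\mathrm{E}_{W(\cdot|x)}[\ln\frac{W(Y|x)}{q(Y)}]=\mathrm{E}_{W(\cdot|x_{\mathrm o})}[\ln\frac{W(Y|x_{\mathrm o})}{q(Y)}]=C(W)$; $\mathrm{Var}_{W(\cdot|x)}[\ln\frac{W(Y|x)}{q(Y)}]=\mathrm{Var}_{W(\cdot|x_{\mathrm o})}[\ln\frac{W(Y|x_{\mathrm o})}{q(Y)}]=:V(W)$ and $V(W)=V_\epsilon(W)$; and $m_3(x)=m_3(x_{\mathrm o})$. (iii) For every $R\ge0$, every $(N,R)$ code with ideal feedback and every message $m$, $P_{\mathbf{Y}^N|M}\{\mathcal{S}(R)\mid m\}=W\{\mathcal{S}(R)\mid\mathbf{x}_{\mathrm o}^N\}$, where $\mathbf{x}_{\mathrm o}^N$ is the all-$x_{\mathrm o}$ sequence. (iv) $\mathrm{E}_q[-\ln\alpha_Y]=C(W)$, $\mathrm{Var}_q[-\ln\alpha_Y]=V(W)$ and $\mathrm{E}_q[|-\ln\alpha_Y-C(W)|^3]=m_3(x_{\mathrm o})$.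
   Context: $\mathcal{X},\mathcal{Y}$ finite. Symmetric (Gallager): outputs partitionable into subsets within each of which every row of the transition submatrix is a permutation of every other row and every column of every other column. Singular: $W(y|x)W(y|z)>0$ implies $W(y|x)=W(y|z)$. $q(y)=\sum_x\frac1{|\mathcal{X}|}W(y|x)$; $\alpha_y=\sum_{x:W(y|x)>0}\frac1{|\mathcal{X}|}$; $M_x(\lambda)=\mathrm{E}_{W(\cdot|x)}[e^{\lambda\ln\frac{W(Y|x)}{q(Y)}}]$; $m_3(x)=\mathrm{E}_{W(\cdot|x)}[|\ln\frac{W(Y|x)}{q(Y)}-C(W)|^3]$; $C(W)$ is the capacity. For $P\in\mathcal{P}(\mathcal{X})$, $q_P(y)=\sum_xP(x)W(y|x)$, $V(P,W)=\sum_{x,y}P(x)W(y|x)[\ln\frac{W(y|x)}{q_P(y)}-\sum_bW(b|x)\ln\frac{W(b|x)}{q_P(b)}]^2$, $V_\epsilon(W)=\min_{Q:I(Q;W)=C(W)}V(Q,W)$ for $\epsilon<1/2$ and the corresponding max for $\epsilon\ge1/2$. $\mathcal{S}(R)=\{\mathbf{y}^N:\frac1N\sum_n\ln\frac1{\alpha_{y_n}}\le R\}$. A code with ideal feedback has message set $\{1,\dots,\lceil e^{NR}\rceil\}$, encoders $f_n:\mathcal{M}\times\mathcal{Y}^{n-1}\to\mathcal{X}$, and $P_{\mathbf{Y}^N|M}(\mathbf{y}^N|m)=\prod_nW(y_n|f_n(m,\mathbf{y}^{n-1}))$. *)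

(* Defs.v *)
From HB Require Import structures.
From mathcomp Require Import all_boot all_order all_algebra.
From mathcomp Require Import all_classical all_reals all_analysis.
Set Implicit Arguments. Unset Strict Implicit. Unset Printing Implicit Defensive.
Import Order.TTheory GRing.Theory Num.Theory.
Local Open Scope ring_scope.


Section Channel.
Variables (R : realType) (X Y : finType).
(* A channel is W : X -> Y -> R with W x y = W(y|x). *)
Implicit Types (W : X -> Y -> R) (P : X -> R).

Definition is_channel W :=
  (forall x y, 0 <= W x y) /\ (forall x, \sum_(y : Y) W x y = 1).

Definition is_dist P := (forall x, 0 <= P x) /\ \sum_(x : X) P x = 1.

Definition gallager_symmetric W :=
  exists Part : {set {set Y}}, finset.partition Part [set: Y] /\
    forall B, B \in Part ->
      (forall x x', perm_eq [seq W x y | y in B] [seq W x' y | y in B]) /\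
      (forall y y', y \in B -> y' \in B ->
         perm_eq [seq W x y | x : X] [seq W x y' | x : X]).

Definition singular W :=
  forall x z y, 0 < W x y * W z y -> W x y = W z y.

Definition no_zero_column W := forall y, exists x, 0 < W x y.

Definition qP W P (y : Y) : R := \sum_(x : X) P x * W x y.

Definition unif : X -> R := fun _ => (#|X|%:R)^-1.

Definition qunif W (y : Y) : R := \sum_(x : X) (#|X|%:R)^-1 * W x y.

Definition alpha W (y : Y) : R :=
  \sum_(x : X | 0 < W x y) (#|X|%:R)^-1.

Definition MI W P : R :=
  \sum_(x : X) \sum_(y : Y) P x * W x y * ln (W x y / qP W P y).

Definition capacity W : R := sup [set r | exists P, is_dist P /\ r = MI W P]%classic.

Definition Vcond W P : R :=
  \sum_(x : X) \sum_(y : Y) P x * W x y *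
    (ln (W x y / qP W P y) -
     \sum_(b : Y) W x b * ln (W x b / qP W P b)) ^+ 2.

Definition Veps (eps : R) W : R :=
  let S := [set v | exists Q, [/\ is_dist Q, MI W Q = capacity W & v = Vcond W Q]]%classic in
  if eps < 2^-1 then inf S else sup S.

Definition idens W (x : X) (y : Y) : R := ln (W x y / qunif W y).

Definition mgf W (x : X) (lam : R) : R :=
  \sum_(y : Y) W x y * expR (lam * idens W x y).

Definition mean_id W (x : X) : R := \sum_(y : Y) W x y * idens W x y.

Definition var_id W (x : X) : R :=
  \sum_(y : Y) W x y * (idens W x y - mean_id W x) ^+ 2.

Definition m3 W (x : X) : R :=
  \sum_(y : Y) W x y * `|idens W x y - capacity W| ^+ 3.

Definition msg_card (N : nat) (Rt : R) : nat := `|Num.ceil (expR (N%:R * Rt))|%N.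

(* A code with ideal feedback of blocklength N and M messages: encoder at time
   n (0-based) maps the message and the past outputs y_0 .. y_{n-1} to an
   input letter. *)
Definition fb_encoder (N M : nat) := 'I_N -> 'I_M -> seq Y -> X.

Definition fb_law W (N M : nat) (f : fb_encoder N M) (m : 'I_M)
    (y : N.-tuple Y) : R :=
  \prod_(n < N) W (f n m (take n y)) (tnth y n).

Definition Sset W (N : nat) (Rt : R) : pred (N.-tuple Y) :=
  fun y => (N%:R)^-1 * \sum_(n < N) ln ((alpha W (tnth y n))^-1) <= Rt.

Definition memoryless W (N : nat) (xs : N.-tuple X) (y : N.-tuple Y) : R :=
  \prod_(n < N) W (tnth xs n) (tnth y n).

End Channel.

(* Main.v *)
Require Import Defs.
From HB Require Import structures.
From mathcomp Require Import all_boot all_order all_algebra.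
From mathcomp Require Import all_classical all_reals all_analysis.
From mathcomp.algebra_tactics Require Import ring lra.
Import Order.TTheory GRing.Theory Num.Theory.
Local Open Scope ring_scope.

Section L.
Variables (R : realType) (X Y : finType) (W : X -> Y -> R).
Hypothesis HW : is_channel W.
Hypothesis Hsym : gallager_symmetric W.
Hypothesis Hsing : singular W.
Hypothesis Hcol : no_zero_column W.

Lemma W_ge0 x y : 0 <= W x y. Proof. exact: HW.1. Qed.

Lemma alpha_perm y y' :
  perm_eq [seq W x y | x : X] [seq W x y' | x : X] -> alpha W y = alpha W y'.
Proof.
move=> Hp; rewrite /alpha !(big_mkcond (fun x => 0 < W x _)) /=.
have E z : \sum_(x : X) (if 0 < W x z then (#|X|%:R)^-1 else 0 : R)
   = \sum_(v <- [seq W x z | x : X]) (if 0 < v then (#|X|%:R)^-1 else 0).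
  by rewrite big_image.
by rewrite !E (perm_big _ Hp).
Qed.

Lemma sumA x x' (F : R -> R) :
  \sum_(y : Y) W x y * F (alpha W y) = \sum_(y : Y) W x' y * F (alpha W y).
Proof.
case: Hsym => Part [HP HB].
move: HP => /and3P [/eqP Hcov Htriv H0].
have C G : \sum_(y : Y) G y = \sum_(y in finset.cover Part) G y :> R.
  by apply: eq_bigl => y; rewrite Hcov finset.in_setT.
rewrite !C !finset.big_trivIset //.
apply: eq_bigr => B /HB [Hrow Hcolp].
have [->|/finset.set0Pn [y0 Hy0]] := eqVneq B finset.set0; first by rewrite !big_set0.
have E z : \sum_(y in B) W z y * F (alpha W y)
   = (\sum_(v <- [seq W z y | y in B]) v) * F (alpha W y0).
  rewrite big_image big_distrl /=; apply: eq_bigr => y Hy.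
  by rewrite (alpha_perm _ _ (Hcolp y y0 Hy Hy0)).
by rewrite !E (perm_big _ (Hrow x x')).
Qed.


Lemma card_pos (x : X) : (0 < #|X|)%N.
Proof. by apply/card_gt0P; exists x. Qed.

Lemma alpha_gt0 {x y} : 0 < W x y -> 0 < alpha W y.
Proof.
move=> H; rewrite /alpha (bigD1 x) //=.
apply: (@lt_le_trans _ _ ((#|X|%:R)^-1)).
  by rewrite invr_gt0 ltr0n (card_pos x).
by rewrite lerDl sumr_ge0 // => i _; rewrite invr_ge0 ler0n.
Qed.

Lemma qunif_eq {x y} : 0 < W x y -> qunif W y = alpha W y * W x y.
Proof.
move=> H; rewrite /qunif /alpha big_distrl /=.
rewrite (bigID (fun x' => 0 < W x' y)) /= [X in _ + X]big1 ?addr0.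
  apply: eq_bigr => x' Hx'; congr (_ * _); apply: Hsing; exact: mulr_gt0.
move=> x' Hx'; have : W x' y = 0.
  by apply/eqP; rewrite eq_le W_ge0 andbT leNgt.
by move=> ->; rewrite mulr0.
Qed.

Lemma idensE {x y} : 0 < W x y -> idens W x y = - ln (alpha W y).
Proof.
move=> H; rewrite /idens (qunif_eq H).
have Ha := alpha_gt0 H.
rewrite invfM mulrCA mulfV ?gt_eqF // mulr1 lnV //.
Qed.

Lemma Wmul x y (F : R -> R) : W x y * F (idens W x y) = W x y * F (- ln (alpha W y)).
Proof.
have [->|Hn] := eqVneq (W x y) 0; first by rewrite !mul0r.
have Hp : 0 < W x y by rewrite lt_def Hn W_ge0.
by rewrite idensE.
Qed.

Lemma sumI x x' (F : R -> R) :
  \sum_(y : Y) W x y * F (idens W x y) = \sum_(y : Y) W x' y * F (idens W x' y).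
Proof.
transitivity (\sum_(y : Y) W x y * (fun a => F (- ln a)) (alpha W y)).
  by apply: eq_bigr => y _; exact: Wmul.
rewrite (sumA x x' (fun a => F (- ln a))); apply: eq_bigr => y _; symmetry; exact: Wmul.
Qed.

Lemma sum_unif (xo : X) : \sum_(x : X) (#|X|%:R)^-1 = 1 :> R.
Proof.
rewrite sumr_const; set c := (#|X|%:R)^-1; rewrite -mulr_natr /c.
have -> : #|[pred x : X | true]| = #|X| by apply: eq_card.
rewrite mulVf // pnatr_eq0 -lt0n.
exact: (card_pos xo).
Qed.

Lemma sum_q (xo : X) (F : R -> R) :
  \sum_(y : Y) qunif W y * F (alpha W y) = \sum_(y : Y) W xo y * F (alpha W y).
Proof.
transitivity (\sum_(x : X) (#|X|%:R)^-1 * \sum_(y : Y) W x y * F (alpha W y)).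
  rewrite /qunif.
  under eq_bigr => y _ do rewrite big_distrl /=.
  rewrite exchange_big /=; apply: eq_bigr => x _; rewrite big_distrr /=.
  by apply: eq_bigr => y _; rewrite mulrA.
under eq_bigr => x _ do rewrite (sumA x xo F).
rewrite -big_distrl /= (sum_unif xo); exact: mul1r.
Qed.


Variable x0 : X.

Lemma mean_const x : mean_id W x = mean_id W x0.
Proof. exact: (sumI x x0 (fun t => t)). Qed.

Lemma var_const x : var_id W x = var_id W x0.
Proof.
rewrite /var_id (mean_const x); exact: (sumI x x0 (fun t => (t - mean_id W x0) ^+ 2)).
Qed.

Lemma q_gt0 y : 0 < qunif W y.
Proof. by case: (Hcol y) => x Hx; rewrite (qunif_eq Hx) mulr_gt0 // (alpha_gt0 Hx). Qed.

Lemma qP_ge0 P y : is_dist P -> 0 <= qP W P y.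
Proof. by move=> [HP _]; apply: sumr_ge0 => x _; rewrite mulr_ge0 // W_ge0. Qed.

Lemma qP_ge P x y : is_dist P -> P x * W x y <= qP W P y.
Proof.
move=> [HP _]; rewrite /qP (bigD1 x) //= lerDl.
by apply: sumr_ge0 => x' _; rewrite mulr_ge0 // W_ge0.
Qed.

Lemma sum_qP P : \sum_(y : Y) qP W P y = \sum_(x : X) P x.
Proof.
rewrite /qP exchange_big /=; apply: eq_bigr => x _.
by rewrite -big_distrr /= HW.2 mulr1.
Qed.

Lemma unif_dist : is_dist (@unif R X).
Proof.
split; last exact: (sum_unif x0).
by move=> x; rewrite /unif invr_ge0 ler0n.
Qed.

Lemma sum_qunif : \sum_(y : Y) qunif W y = 1.
Proof. by rewrite (sum_qP (@unif R X)); exact: (sum_unif x0). Qed.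

Lemma MI_decomp P : is_dist P ->
  MI W P = mean_id W x0 + \sum_(y : Y) qP W P y * ln (qunif W y / qP W P y).
Proof.
move=> HPd; have [HP0 HP1] := HPd.
rewrite /MI.
transitivity (\sum_(x : X) \sum_(y : Y) (P x * W x y * idens W x y
   + P x * W x y * ln (qunif W y / qP W P y))).
  apply: eq_bigr => x _; apply: eq_bigr => y _.
  have [->|Hn] := eqVneq (P x * W x y) 0; first by rewrite !mul0r addr0.
  have Hpos : 0 < P x * W x y by rewrite lt_def Hn mulr_ge0 // W_ge0.
  have HWp : W x y != 0 by apply: contraNneq Hn => ->; rewrite mulr0.
  have HWp' : 0 < W x y by rewrite lt_def HWp W_ge0.
  have Hq : 0 < qP W P y := lt_le_trans Hpos (qP_ge P x y HPd).
  have Hu := q_gt0 y.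
  rewrite -mulrDr /idens -lnM ?posrE ?divr_gt0 //.
  by rewrite mulrA divfK // gt_eqF.
under eq_bigr => x _ do rewrite big_split /=.
rewrite big_split /=.
have E1 : \sum_(x : X) \sum_(y : Y) P x * W x y * idens W x y = mean_id W x0.
  transitivity (\sum_(x : X) P x * mean_id W x0).
    apply: eq_bigr => x _; rewrite -(mean_const x) /mean_id big_distrr /=.
    by apply: eq_bigr => y _; rewrite mulrA.
  by rewrite -big_distrl /= HP1 mul1r.
rewrite E1; congr (_ + _).
rewrite exchange_big /=; apply: eq_bigr => y _.
set L := ln _; by rewrite /qP big_distrl.
Qed.


Lemma ln_le {t : R} : 0 < t -> ln t <= t - 1.
Proof.
move=> Ht; have := expR_ge1Dx (ln t); rewrite lnK ?posrE // => H; lra.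
Qed.

Lemma ln_lt {t : R} : 0 < t -> t != 1 -> ln t < t - 1.
Proof.
move=> Ht Ht1; have Hl : ln t != 0 by rewrite ln_eq0.
have := expR_gt1Dx Hl; rewrite lnK ?posrE // => H; lra.
Qed.

Lemma term_le P y : is_dist P ->
  qP W P y * ln (qunif W y / qP W P y) <= qunif W y - qP W P y.
Proof.
move=> HP; have Hq0 := qP_ge0 P y HP; have Hu := q_gt0 y.
have [->|Hn] := eqVneq (qP W P y) 0; first by rewrite mul0r subr0 ltW.
have Hp : 0 < qP W P y by rewrite lt_def Hn Hq0.
have Ht : 0 < qunif W y / qP W P y by rewrite divr_gt0.
have := ln_le Ht => H.
have := ler_wpM2l Hq0 H.
by rewrite mulrBr mulr1 mulrCA mulfV ?mulr1.
Qed.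

Lemma D_le P : is_dist P ->
  \sum_(y : Y) qP W P y * ln (qunif W y / qP W P y) <= 0.
Proof.
move=> HP.
apply: le_trans (ler_sum _ (fun y _ => term_le P y HP)) _.
by rewrite sumrB sum_qunif sum_qP HP.2 subrr.
Qed.

Lemma MI_le P : is_dist P -> MI W P <= mean_id W x0.
Proof. by move=> HP; rewrite MI_decomp // gerDl D_le. Qed.

Lemma MI_unif : MI W (@unif R X) = mean_id W x0.
Proof.
rewrite (MI_decomp _ unif_dist) big1 ?addr0 // => y _.
have Hu := q_gt0 y.
have -> : qP W (@unif R X) y = qunif W y by [].
by rewrite mulfV ?gt_eqF // ln1 mulr0.
Qed.

Lemma cap_eq : capacity W = mean_id W x0.
Proof.
rewrite /capacity; apply/eqP; rewrite eq_le; apply/andP; split.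
  apply: ge_sup.
    by exists (mean_id W x0), (@unif R X); split; [exact: unif_dist | rewrite MI_unif].
  by move=> r [P [HP ->]]; exact: MI_le.
apply: ub_le_sup.
  by exists (mean_id W x0) => r [P [HP ->]]; exact: MI_le.
by exists (@unif R X); split; [exact: unif_dist | rewrite MI_unif].
Qed.


Lemma qP_eq Q : is_dist Q -> MI W Q = mean_id W x0 ->
  forall y, 0 < qP W Q y -> qP W Q y = qunif W y.
Proof.
move=> HQ HMI.
have H0 : \sum_(y : Y) qP W Q y * ln (qunif W y / qP W Q y) = 0.
  by move: HMI; rewrite (MI_decomp _ HQ) => H; lra.
have Hs : \sum_(y : Y) (qunif W y - qP W Q y - qP W Q y * ln (qunif W y / qP W Q y)) = 0.
  by rewrite !sumrB H0 sum_qunif sum_qP HQ.2 !subrr.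
have Hnn : forall y : Y, true -> 0 <= qunif W y - qP W Q y - qP W Q y * ln (qunif W y / qP W Q y).
  by move=> y _; rewrite subr_ge0; exact: term_le.
have Hz := psumr_eq0P Hnn Hs.
move=> y Hy; have := Hz y isT => Hy0.
have Hu := q_gt0 y.
have Ht : 0 < qunif W y / qP W Q y by rewrite divr_gt0.
have [Ht1|Ht1] := eqVneq (qunif W y / qP W Q y) 1.
  by rewrite -[qunif W y](divfK (lt0r_neq0 Hy)) Ht1 mul1r.
have := ln_lt Ht Ht1 => H.
have := ltr_pM2l Hy; move=> /(_ (ln (qunif W y / qP W Q y)) (qunif W y / qP W Q y - 1)).
rewrite H mulrBr mulr1 mulrCA mulfV ?gt_eqF // mulr1 => /esym H2.
lra.
Qed.

Lemma Vcond_eq Q : is_dist Q -> MI W Q = mean_id W x0 -> Vcond W Q = var_id W x0.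
Proof.
move=> HQ HMI; rewrite /Vcond.
transitivity (\sum_(x : X) Q x * var_id W x).
  apply: eq_bigr => x _.
  have [->|Hn] := eqVneq (Q x) 0.
    by rewrite mul0r big1 // => y _; rewrite !mul0r.
  have HQx : 0 < Q x by rewrite lt_def Hn HQ.1.
  have Heq b (F : R -> R) : W x b * F (ln (W x b / qP W Q b)) = W x b * F (idens W x b).
    have [->|Hb] := eqVneq (W x b) 0; first by rewrite !mul0r.
    have Hbp : 0 < W x b by rewrite lt_def Hb W_ge0.
    have Hp : 0 < qP W Q b := lt_le_trans (mulr_gt0 HQx Hbp) (qP_ge Q x b HQ).
    by rewrite /idens (qP_eq _ HQ HMI _ Hp).
  have -> : \sum_(b : Y) W x b * ln (W x b / qP W Q b) = mean_id W x.
    by apply: eq_bigr => b _; exact: (Heq b (fun t => t)).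
  rewrite /var_id big_distrr /=; apply: eq_bigr => y _.
  rewrite -mulrA; congr (_ * _).
  exact: (Heq y (fun t => (t - mean_id W x) ^+ 2)).
under eq_bigr => x _ do rewrite (var_const x).
by rewrite -big_distrl /= HQ.2 mul1r.
Qed.

Lemma Veps_eq eps : Veps eps W = var_id W x0.
Proof.
rewrite /Veps /=.
have -> : [set v | exists Q, [/\ is_dist Q, MI W Q = capacity W & v = Vcond W Q]]%classic
   = [set var_id W x0]%classic.
  apply/seteqP; split => v /=.
    by move=> [Q [HQ HM ->]]; apply: Vcond_eq => //; rewrite HM cap_eq.
  move=> ->; exists (@unif R X); split; first exact: unif_dist.
    by rewrite MI_unif cap_eq.
  by rewrite (Vcond_eq _ unif_dist MI_unif).
by case: ifP => _; rewrite ?inf1 ?sup1.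
Qed.


Definition fbl {N} (e : 'I_N -> seq Y -> X) (y : N.-tuple Y) : R :=
  \prod_(n < N) W (e n (take n y)) (tnth y n).

Lemma sum_tupleS N (F : N.+1.-tuple Y -> R) :
  \sum_(t : N.+1.-tuple Y) F t = \sum_(y0 : Y) \sum_(t : N.-tuple Y) F [tuple of y0 :: t].
Proof.
rewrite pair_bigA /=.
rewrite (reindex (fun p : Y * N.-tuple Y => [tuple of p.1 :: p.2])) /=.
  by apply: eq_bigr => -[a t].
exists (fun t : N.+1.-tuple Y => (thead t, [tuple of behead t])).
  move=> [a t] _ /=; congr pair =>//; apply: val_inj => //.
by move=> t _; rewrite [RHS]tuple_eta.
Qed.

Lemma fbl_cons N (e : 'I_N.+1 -> seq Y -> X) y0 (t : N.-tuple Y) :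
  fbl e [tuple of y0 :: t] = W (e ord0 [::]) y0 * fbl (fun n s => e (lift ord0 n) (y0 :: s)) t.
Proof.
rewrite /fbl big_ord_recl /= tnth0; congr (_ * _); apply: eq_bigr => i _.
by rewrite tnthS.
Qed.

Lemma fb_main N : forall (e : 'I_N -> seq Y -> X) (g : seq R -> R),
  \sum_(y : N.-tuple Y) fbl e y * g (map (alpha W) y)
  = \sum_(y : N.-tuple Y) fbl (fun _ _ => x0) y * g (map (alpha W) y).
Proof.
elim: N => [|N IH] e g.
  by apply: eq_bigr => y _; rewrite /fbl !big_ord0.
rewrite !sum_tupleS.
transitivity (\sum_(y0 : Y) W (e ord0 [::]) y0 * (fun c => \sum_(t : N.-tuple Y)
    fbl (fun _ _ => x0) t * g (c :: map (alpha W) t)) (alpha W y0)).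
  apply: eq_bigr => y0 _ /=.
  rewrite -(IH (fun n s => e (lift ord0 n) (y0 :: s)) (fun s => g (alpha W y0 :: s))) big_distrr /=.
  by apply: eq_bigr => t _; rewrite fbl_cons mulrA.
rewrite (sumA (e ord0 [::]) x0 (fun c => \sum_(t : N.-tuple Y) fbl (fun _ _ => x0) t * g (c :: map (alpha W) t))); apply: eq_bigr => y0 _ /=.
rewrite big_distrr /=.
by apply: eq_bigr => t _; rewrite fbl_cons mulrA.
Qed.


Lemma all_parts (eps : R) :
  (forall (x : X) (lam : R), mgf W x lam = mgf W x0 lam) /\
  ((forall x : X, mean_id W x = mean_id W x0) /\ mean_id W x0 = capacity W /\
   (forall x : X, var_id W x = var_id W x0) /\ var_id W x0 = Veps eps W /\
   (forall x : X, m3 W x = m3 W x0)) /\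
  (forall (N : nat) (Rt : R), 0 <= Rt ->
     forall (f : @fb_encoder X Y N (msg_card N Rt)) (m : 'I_(msg_card N Rt)),
       \sum_(y : N.-tuple Y | Sset W Rt y) fb_law W f m y
       = \sum_(y : N.-tuple Y | Sset W Rt y) memoryless W [tuple of nseq N x0] y) /\
  (\sum_(y : Y) qunif W y * (- ln (alpha W y)) = capacity W /\
   \sum_(y : Y) qunif W y * (- ln (alpha W y) - capacity W) ^+ 2 = var_id W x0 /\
   \sum_(y : Y) qunif W y * `|- ln (alpha W y) - capacity W| ^+ 3 = m3 W x0).
Proof.
have Hm3 x : m3 W x = m3 W x0.
  exact: (sumI x x0 (fun t => `|t - capacity W| ^+ 3)).
have Hq (F : R -> R) : \sum_(y : Y) qunif W y * F (- ln (alpha W y))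
    = \sum_(y : Y) W x0 y * F (idens W x0 y).
  rewrite (sum_q x0 (fun a => F (- ln a))); apply: eq_bigr => y _.
  by rewrite Wmul.
split.
  move=> x lam; exact: (sumI x x0 (fun t => expR (lam * t))).
split.
  split; first exact: mean_const.
  split; first by rewrite cap_eq.
  split; first exact: var_const.
  split; first by rewrite Veps_eq.
  exact: Hm3.
split.
  move=> N Rt _ f m.
  pose g := fun s : seq R => if N%:R^-1 * \sum_(c <- s) ln c^-1 <= Rt then 1 else 0 : R.
  have E (F : N.-tuple Y -> R) : \sum_(y : N.-tuple Y | Sset W Rt y) F y
      = \sum_(y : N.-tuple Y) F y * g (map (alpha W) y).
    rewrite big_mkcond /=; apply: eq_bigr => y _.
    rewrite /g big_map big_tuple /Sset.
    by case: ifP => _; rewrite ?mulr1 ?mulr0.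
  rewrite !E.
  transitivity (\sum_(y : N.-tuple Y) fbl (fun n s => f n m s) y * g (map (alpha W) y)).
    by [].
  rewrite fb_main; apply: eq_bigr => y _; congr (_ * _).
  by rewrite /fbl /memoryless; apply: eq_bigr => n _; rewrite tnth_nseq.
split.
  by rewrite (Hq (fun t => t)) cap_eq.
split.
  by rewrite (Hq (fun t => (t - capacity W) ^+ 2)) cap_eq.
exact: (Hq (fun t => `|t - capacity W| ^+ 3)).
Qed.

End L.

Theorem lemma10 (R : realType) (X Y : finType) (W : X -> Y -> R)
  (HW : is_channel W) (Hsym : gallager_symmetric W) (Hsing : singular W)
  (Hcol : no_zero_column W) (xo : X) (eps : R) (Heps0 : 0 < eps) (Heps1 : eps < 1) :
  (* (i) *)
  (forall (x : X) (lam : R), mgf W x lam = mgf W xo lam) /\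
  (* (ii) *)
  ((forall x : X, mean_id W x = mean_id W xo) /\ mean_id W xo = capacity W /\
   (forall x : X, var_id W x = var_id W xo) /\ var_id W xo = Veps eps W /\
   (forall x : X, m3 W x = m3 W xo)) /\
  (* (iii) *)
  (forall (N : nat) (Rt : R), 0 <= Rt ->
     forall (f : @fb_encoder X Y N (msg_card N Rt)) (m : 'I_(msg_card N Rt)),
       \sum_(y : N.-tuple Y | Sset W Rt y) fb_law W f m y
       = \sum_(y : N.-tuple Y | Sset W Rt y) memoryless W [tuple of nseq N xo] y) /\
  (* (iv) *)
  (\sum_(y : Y) qunif W y * (- ln (alpha W y)) = capacity W /\
   \sum_(y : Y) qunif W y * (- ln (alpha W y) - capacity W) ^+ 2 = var_id W xo /\
   \sum_(y : Y) qunif W y * `|- ln (alpha W y) - capacity W| ^+ 3 = m3 W xo).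
Proof.
by apply: all_parts.
Qed.
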